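(* Let $n\ge 2$ and $1\le k\le n-1$. The automaton $\mathcal{CB}_{n,k}$ has a reset word of length at most $4n\lceil\log_2 n\rceil$.
   Context: A deterministic finite automaton (DFA) is a triple $\langle Q,\Sigma,\delta\rangle$ with $Q$ a finite set of states, $\Sigma$ a finite alphabet and $\delta\colon Q\times\Sigma\to Q$. Words act on states from left to right: $q\cdot(a_1a_2\cdots a_\ell)=(\cdots((q\cdot a_1)\cdot a_2)\cdots)\cdot a_\ell$, where $q\cdot a=\delta(q,a)$; for $P\subseteq Q$, $P\cdot w=\{p\cdot w\mid p\in P\}$. A word $w$ is a reset (synchronizing) word if $|Q\cdot w|=1$. The automaton $\mathcal{CB}_{n,k}$ has states $q_1,\dots,q_n$ and letters $a,b,c$: $a$ acts as the cyclic permutation $q_i\mapsto q_{i+1}$ for $i<n$ and $q_n\mapsto q_1$; $b$ maps $q_1$ to $q_2$ and fixes all other states; $c$ swaps $q_k$ and $q_{k+1}$ and fixes all other states. *)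

(* Defs.v *)
From mathcomp Require Import all_boot.
Unset Printing Implicit Defensive.

Inductive letter := La | Lb | Lc.

(* States q_1..q_n are encoded as 'I_n: q_i is the ordinal with value i-1. *)
Definition cb_step_nat (n k : nat) (x : letter) (i : nat) : nat :=
  match x with
  | La => (i.+1) %% n
  | Lb => if i == 0 then 1 else i
  | Lc => if i == k.-1 then k              (* swap q_k and q_{k+1} *)
          else if i == k then k.-1 else i
  end.

(* delta : Q x Sigma -> Q.  For n >= 2 and 1 <= k <= n-1 the value
   cb_step_nat n k x q always lies in 'I_n, so insubd (with an irrelevant
   default q) just returns that ordinal. *)
Definition cb_delta (n k : nat) (q : 'I_n) (x : letter) : 'I_n :=
  insubd q (cb_step_nat n k x q).

Definition cb_act (n k : nat) (q : 'I_n) (w : seq letter) : 'I_n :=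
  foldl (cb_delta n k) q w.

Definition cb_image (n k : nat) (w : seq letter) : {set 'I_n} :=
  [set cb_act n k q w | q : 'I_n].

Definition is_reset_word (n k : nat) (w : seq letter) : Prop :=
  #|cb_image n k w| = 1.

(* Main.v *)
Require Import Defs.
From mathcomp Require Import all_boot all_algebra.
Import GRing.Theory.
From mathcomp Require Import ring zify.

Section R.
Variables (n' k : nat).
Local Notation N := n'.+2.
Hypotheses (hk1 : 0 < k) (hkN : k < N).
Local Open Scope ring_scope.

Let K : 'Z_N := k%:R.

Lemma valZ (a : nat) : nat_of_ord (a%:R : 'Z_N) = (a %% N)%N.
Proof. by rewrite val_Zp_nat. Qed.

Lemma natZ_eq (a b : nat) : (a < N)%N -> (b < N)%N -> ((a%:R : 'Z_N) == b%:R) = (a == b).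
Proof.
move=> ha hb; apply/eqP/eqP => [/(congr1 (@nat_of_ord _))|->//].
by rewrite !valZ !modn_small.
Qed.

Lemma NZ0 : (N%:R : 'Z_N) = 0.
Proof. by rewrite pchar_Zp. Qed.

Lemma delta_a (q : 'Z_N) : cb_delta N k q La = q + 1.
Proof.
apply: val_inj; rewrite /cb_delta val_insubd /= ltn_pmod //.
by rewrite -addn1 [(1 %% _)%N]modn_small.
Qed.

Lemma valK : nat_of_ord K = k.
Proof. by rewrite valZ modn_small. Qed.

Lemma valK1 : nat_of_ord (K - 1) = k.-1.
Proof.
have -> : K - 1 = (k.-1)%:R by rewrite /K -(prednK hk1) mulrSr addrK.
by rewrite valZ modn_small // (leq_ltn_trans (leq_pred _) hkN).
Qed.

Lemma delta_b (q : 'Z_N) : cb_delta N k q Lb = if q == 0 then 1 else q.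
Proof.
apply: val_inj; rewrite /cb_delta val_insubd /=.
have -> : (q == 0) = (nat_of_ord q == 0%N) by [].
by case: eqP => _ /=; rewrite ?ltn_ord // modn_small.
Qed.

Lemma eqK1 (q : 'Z_N) : (nat_of_ord q == k.-1) = (q == K - 1).
Proof. by apply/eqP/eqP => [h|->]; [apply: val_inj; rewrite /= h; exact/esym/valK1| exact: valK1]. Qed.
Lemma eqK (q : 'Z_N) : (nat_of_ord q == k) = (q == K).
Proof. by apply/eqP/eqP => [h|->]; [apply: val_inj; rewrite /= h; exact/esym/valK| exact: valK]. Qed.

Lemma delta_c (q : 'Z_N) : cb_delta N k q Lc =
  if q == K - 1 then K else if q == K then K - 1 else q.
Proof.
apply: val_inj; rewrite /cb_delta val_insubd /= eqK1 eqK.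
have hk' : (k.-1 < N)%N by rewrite (leq_ltn_trans (leq_pred _) hkN).
case: (q == K - 1); first by rewrite hkN valK.
case: (q == K); first by rewrite hk' valK1.
by rewrite ltn_ord.
Qed.

Definition zupd (t : nat) (x : letter) (z : 'Z_N) : 'Z_N :=
  match x with
  | La => z
  | Lb => if z == K + t%:R then z - 1 else z
  | Lc => if z == t%:R then z + 1 else if z == t%:R + 1 then z - 1 else z
  end.

Lemma eqh (a b c : 'Z_N) : (a + b - c == b) = (c == a).
Proof. by rewrite subr_eq [b + c]addrC (inj_eq (addIr b)) eq_sym. Qed.

Lemma eqh0 (x c : 'Z_N) : (x - c == x) = (c == 0).
Proof. by have := eqh 0 x c; rewrite add0r. Qed.

Lemma K1neK : (K - 1 == K) = false.
Proof. by rewrite -[X in _ == X]subr0 (inj_eq (addrI K)) (inj_eq oppr_inj) oner_eq0. Qed.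

Lemma letter_step t cur z x : cur + z = K + t%:R ->
  cb_delta N k cur x + zupd t x z = K + (t + (if x is La then 1 else 0))%:R.
Proof.
move=> h; have hz : z = K + t%:R - cur by rewrite -h addrC addKr.
rewrite hz {h hz}; case: x => /=.
- rewrite delta_a addn1 mulrS; ring.
- rewrite delta_b addn0 eqh0.
  by case: eqP => [->|h0]; ring.
- rewrite delta_c addn0 eqh.
  have -> : K + t%:R - cur = (K - 1) + (t%:R + 1) - cur by ring.
  rewrite eqh.
  case: (eqVneq cur (K - 1)) => [->|h1].
    by rewrite K1neK; ring.
  case: (eqVneq cur K) => [->|h2]; ring.
Qed.

Definition stepw (c b : bool) : seq letter :=
  (if c then [:: Lc] else [::]) ++ (if b then [:: Lb] else [::]) ++ [:: La].
Definition zstep t (c b : bool) (z : 'Z_N) : 'Z_N :=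
  let z1 := if c then zupd t Lc z else z in if b then zupd t Lb z1 else z1.

Lemma act_cat q w1 w2 : cb_act N k q (w1 ++ w2) = cb_act N k (cb_act N k q w1) w2.
Proof. by rewrite /cb_act foldl_cat. Qed.

Lemma step_ok t c b cur z : cur + z = K + t%:R ->
  cb_act N k cur (stepw c b) + zstep t c b z = K + t.+1%:R.
Proof.
move=> h; rewrite /stepw /zstep.
have h1 : cb_act N k cur (if c then [:: Lc] else [::]) + (if c then zupd t Lc z else z) = K + t%:R.
  by case: c => //=; rewrite (letter_step _ _ _ Lc h) addn0.
rewrite act_cat; move: h1.
set c1 := cb_act _ _ _ _; set z1 := (if c then _ else _) => h1.
have h2 : cb_act N k c1 (if b then [:: Lb] else [::]) + (if b then zupd t Lb z1 else z1) = K + t%:R.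
  by case: b => //=; rewrite (letter_step _ _ _ Lb h1) addn0.
rewrite act_cat; move: h2.
set c2 := cb_act _ _ _ _; set z2 := (if b then _ else _) => h2.
by rewrite /= (letter_step _ _ _ La h2) addn1.
Qed.

Section Run.
Variables (cs bs : nat -> bool).
Definition W (T : nat) : seq letter := flatten [seq stepw (cs t) (bs t) | t <- iota 0 T].
Fixpoint zit (T : nat) (z : 'Z_N) : 'Z_N :=
  if T is T'.+1 then zstep T' (cs T') (bs T') (zit T' z) else z.

Lemma W_S T : W T.+1 = W T ++ stepw (cs T) (bs T).
Proof. by rewrite /W -addn1 iotaD map_cat flatten_cat /= cats0. Qed.

Lemma run T cur z : cur + z = K -> cb_act N k cur (W T) + zit T z = K + T%:R.
Proof.
move=> h; elim: T => [|T IH]; first by rewrite /W /= addr0.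
by rewrite W_S act_cat /= (step_ok _ _ _ _ _ IH).
Qed.

Lemma size_W T : size (W T) = (T + \sum_(t < T) cs t + \sum_(t < T) bs t)%N.
Proof.
elim: T => [|T IH]; first by rewrite /W /= !big_ord0.
rewrite W_S size_cat IH !big_ord_recr /=.
by case: (cs T); case: (bs T) => /=; lia.
Qed.
End Run.

Lemma eqA0 (a b : 'Z_N) : (a + b == b) = (a == 0).
Proof. by rewrite -{2}[b]add0r (inj_eq (addIr b)). Qed.
Lemma eqA1 (a b : 'Z_N) : (a + b == b + 1) = (a == 1).
Proof. by rewrite [b + 1]addrC (inj_eq (addIr b)). Qed.

Lemma Kshift (a : nat) : K + (a + N - k)%:R = a%:R.
Proof.
rewrite /K -natrD.
have -> : (k + (a + N - k) = a + N)%N by lia.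
by rewrite natrD NZ0 addr0.
Qed.

Section Round.
Variables (m : nat) (x : nat -> nat).
Hypotheses (hm : (2 <= m)%N) (hinc : forall l, (l.+1 < m)%N -> (x l < x l.+1)%N)
  (hxN : (x m.-1 < N)%N).

Local Notation p := (m./2).

Lemma xlt i j : (i < j)%N -> (j < m)%N -> (x i < x j)%N.
Proof.
move=> hij; elim: j hij => // j IH; rewrite ltnS leq_eqVlt => /orP[/eqP<- hj|hij hj].
  exact: hinc.
by apply: ltn_trans (IH hij (ltnW hj)) (hinc _ hj).
Qed.

Lemma xle i j : (i <= j)%N -> (j < m)%N -> (x i <= x j)%N.
Proof. by rewrite leq_eqVlt => /orP[/eqP->//|h hj]; apply/ltnW/xlt. Qed.

Lemma xinv_lt i j : (i < m)%N -> (j < m)%N -> (x i < x j)%N -> (i < j)%N.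
Proof. move=> hi hj h; rewrite ltnNge; apply/negP => hji; have := xle _ _ hji hi; lia. Qed.

Lemma xinv_le i j : (i < m)%N -> (j < m)%N -> (x i <= x j)%N -> (i <= j)%N.
Proof. move=> hi hj h; rewrite leqNgt; apply/negP => hji; have := xlt _ _ hji hi; lia. Qed.

Lemma xN l : (l < m)%N -> (x l < N)%N.
Proof. by move=> hl; apply: leq_ltn_trans hxN; apply: xle => //; lia. Qed.

Lemma hp2 : (2 * p <= m)%N.
Proof. have := odd_double_half m; rewrite -mul2n; lia. Qed.

Lemma ip (i : 'I_p) : ((2 * i).+1 < m)%N.
Proof. have := ltn_ord i; have := hp2; lia. Qed.

Definition csR t := [exists i : 'I_p, (x (2 * i) <= t) && (t + 2 <= x (2 * i).+1)]%N.
Definition bsR t := [exists i : 'I_p, t == x (2 * i).+1 + N - k]%N.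
Local Notation zitR := (zit csR bsR).

Lemma zstep_static t w : (csR t -> w != t%:R /\ w != t%:R + 1) ->
  (bsR t -> w != K + t%:R) -> zstep t (csR t) (bsR t) w = w.
Proof.
rewrite /zstep /=; case: (csR t) => [/(_ isT) [/negbTE-> /negbTE->]|_] /=;
by case: (bsR t) => [/(_ isT) /negbTE->|_].
Qed.

Lemma static_nat t1 t2 z y : (y < N)%N -> (t1 <= t2)%N ->
  (forall t, (t1 <= t)%N -> (t < t2)%N -> forall i : 'I_p,
     (x (2 * i) <= t)%N -> (t + 2 <= x (2 * i).+1)%N -> y <> t /\ y <> t.+1) ->
  (forall t, (t1 <= t)%N -> (t < t2)%N -> forall i : 'I_p,
     t = (x (2 * i).+1 + N - k)%N -> y <> x (2 * i).+1) ->
  zitR t1 z = y%:R -> zitR t2 z = y%:R.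
Proof.
move=> hy; elim: t2 => [|t2 IH]; first by rewrite leqn0 => /eqP->.
rewrite leq_eqVlt => /orP[/eqP->//|ht] hc hb h1.
rewrite /= (IH ht) ?h1 //; last first.
- by move=> t ? ?; apply: hb => //; apply: ltnW.
- by move=> t ? ?; apply: hc => //; apply: ltnW.
apply: zstep_static.
  case/existsP => i /andP[h2 h3].
  have hxi := xN _ (ip i).
  have [e1 e2] := hc t2 ht (leqnn _) i h2 h3.
  rewrite natZ_eq //; last lia.
  rewrite natr1 natZ_eq //; last lia.
  by split; apply/eqP.
case/existsP => i /eqP ht2.
rewrite ht2 Kshift natZ_eq //; last exact: xN _ (ip i).
by apply/eqP; apply: (hb t2 ht (leqnn _) i).
Qed.


Lemma xinj a b : (a < m)%N -> (b < m)%N -> x a = x b -> a = b.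
Proof.
move=> ha hb e; apply/eqP; rewrite eqn_leq.
by rewrite (xinv_le _ _ ha hb) ?e // (xinv_le _ _ hb ha) ?e.
Qed.

Lemma ip2 (i : 'I_p) : (2 * i < m)%N.
Proof. by have := ip i; lia. Qed.

Lemma x1pos (i : 'I_p) : (0 < x (2 * i).+1)%N.
Proof. by have := xlt 0 _ (ltn0Sn _) (ip i); lia. Qed.

Lemma K_ne0 : K != 0.
Proof. by rewrite /K -[0]/(0%:R) natZ_eq //; lia. Qed.

Lemma ride_step (j : 'I_p) t : (x (2 * j) <= t)%N -> (t + 2 <= x (2 * j).+1)%N ->
  zstep t (csR t) (bsR t) t%:R = t.+1%:R.
Proof.
move=> h1 h2.
have -> : csR t by apply/existsP; exists j; rewrite h1 h2.
rewrite /zstep /= eqxx -natr1.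
case hb: (bsR t) => //=.
case/existsP: hb => i /eqP ht.
have := x1pos i; have := xN _ (ip j) => ? ?.
have hk : k != 1%N by apply/eqP => e; lia.
rewrite addrC (inj_eq (addIr _)).
have -> : (1 == K) = false.
  by rewrite /K -[1]/(1%:R) natZ_eq // eq_sym; apply/negbTE.
done.
Qed.

Lemma ride_run (j : 'I_p) z d : (x (2 * j) + d < x (2 * j).+1)%N ->
  zitR (x (2 * j)) z = (x (2 * j))%:R -> zitR (x (2 * j) + d) z = (x (2 * j) + d)%:R.
Proof.
move=> hd h0; elim: d hd => [|d IH] hd; first by rewrite addn0.
rewrite addnS /= IH; last lia.
by apply: (ride_step j); lia.
Qed.

Lemma merge_step (j : 'I_p) : let t := (x (2 * j).+1 + N - k)%N in
  zstep t (csR t) (bsR t) (x (2 * j).+1)%:R = (x (2 * j).+1).-1%:R.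
Proof.
move=> t.
have hx := x1pos j; have hxn := xN _ (ip j).
have hw : (x (2 * j).+1)%:R = K + t%:R :> 'Z_N by rewrite /t Kshift.
have hbt : bsR t by apply/existsP; exists j.
rewrite /zstep hbt.
have -> : (if csR t then zupd t Lc (x (2 * j).+1)%:R else (x (2 * j).+1)%:R) = (x (2 * j).+1)%:R.
  case hc: (csR t) => //=.
  case/existsP: hc => i /andP[hi1 hi2].
  have := xN _ (ip i) => ?.
  have hk : k != 1%N by apply/eqP => e; rewrite /t in hi2; lia.
  rewrite hw eqA0 (negbTE K_ne0) eqA1.
  have -> : (K == 1) = false.
    by rewrite /K -[1]/(1%:R) natZ_eq //; apply/negbTE.
  done.
rewrite /= -hw eqxx.
by rewrite -{1}(prednK hx) -natr1 addrK.
Qed.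

Definition Tr := ((x 1).-1 + 2 * N)%N.

Lemma ltp (i : 'I_p) : (i < p)%N. Proof. exact: ltn_ord. Qed.

Lemma after_ok (j : 'I_p) z t0 : ((x (2 * j).+1).-1 <= t0)%N -> (t0 <= Tr)%N ->
  zitR t0 z = (x (2 * j).+1).-1%:R -> zitR Tr z = (x (2 * j).+1).-1%:R.
Proof.
move=> h0 h1 h; have hx := x1pos j; have hxn := xN _ (ip j).
apply: (static_nat _ _ _ _ _ h1 _ _ h); first lia.
- move=> t ht _ i hi1 hi2; split => e; last lia.
  have a1 := xinv_lt _ _ (ip2 i) (ip j) (_ : x (2 * i) < x (2 * j).+1)%N.
  have a2 := xinv_lt _ _ (ip j) (ip i) (_ : x (2 * j).+1 < x (2 * i).+1)%N.
  have := ltp i; have := ltp j; have := a1 ltac:(lia); have := a2 ltac:(lia); lia.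
- move=> t _ _ i _ e.
  have b0 := xlt _ _ (ltnSn (2 * j)) (ip j).
  have a1 := xinv_lt _ _ (ip i) (ip j) (_ : x (2 * i).+1 < x (2 * j).+1)%N.
  have a2 := xinv_le _ _ (ip2 j) (ip i) (_ : x (2 * j) <= x (2 * i).+1)%N.
  have := a1 ltac:(lia); have := a2 ltac:(lia); lia.
Qed.

Lemma held_final (j : 'I_p) z : zitR 0 z = (x (2 * j))%:R ->
  zitR Tr z = (x (2 * j).+1).-1%:R.
Proof.
move=> h0.
have hx := x1pos j; have hxn := xN _ (ip j).
have b0 := xlt _ _ (ltnSn (2 * j)) (ip j).
have h1 : zitR (x (2 * j)) z = (x (2 * j))%:R.
  apply: (static_nat _ _ _ _ (xN _ (ip2 j)) (leq0n _) _ _ h0).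
  - move=> t _ ht i hi1 hi2; split => e; first lia.
    have a1 := xinv_lt _ _ (ip2 i) (ip2 j) (_ : x (2 * i) < x (2 * j))%N.
    have a2 := xinv_lt _ _ (ip2 j) (ip i) (_ : x (2 * j) < x (2 * i).+1)%N.
    have := ltp i; have := ltp j; have := a1 ltac:(lia); have := a2 ltac:(lia); lia.
  - move=> t _ _ i _ e.
    have := xinj _ _ (ip2 j) (ip i) e; lia.
have h2 := ride_run j z ((x (2 * j).+1).-1 - x (2 * j)) ltac:(lia) h1.
have e : (x (2 * j) + ((x (2 * j).+1).-1 - x (2 * j)) = (x (2 * j).+1).-1)%N by lia.
rewrite e in h2.
by apply: (after_ok j z _ (leqnn _)) => //; rewrite /Tr; lia.
Qed.

Lemma foll_final (j : 'I_p) z : zitR 0 z = (x (2 * j).+1)%:R ->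
  zitR Tr z = (x (2 * j).+1).-1%:R.
Proof.
move=> h0.
have hx := x1pos j; have hxn := xN _ (ip j).
have b0 := xlt _ _ (ltnSn (2 * j)) (ip j).
set mt := (x (2 * j).+1 + N - k)%N.
have h1 : zitR mt z = (x (2 * j).+1)%:R.
  apply: (static_nat _ _ _ _ hxn (leq0n _) _ _ h0).
  - move=> t _ ht i hi1 hi2.
    suff : ~ (x (2 * j).+1 <= t.+1 /\ t <= x (2 * j).+1)%N by lia.
    case=> c1 c2.
    have a1 := xinv_le _ _ (ip2 i) (ip j) (_ : x (2 * i) <= x (2 * j).+1)%N.
    have a2 := xinv_lt _ _ (ip j) (ip i) (_ : x (2 * j).+1 < x (2 * i).+1)%N.
    have := ltp i; have := ltp j; have := a1 ltac:(lia); have := a2 ltac:(lia); lia.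
  - move=> t _ ht i e e2.
    have := xinj _ _ (ip j) (ip i) e2 => e3.
    rewrite -e2 in e; rewrite /mt in ht; lia.
have h2 : zitR mt.+1 z = (x (2 * j).+1).-1%:R by rewrite /= h1 merge_step.
by apply: (after_ok j z _ _ _ h2); rewrite /mt /Tr; lia.
Qed.

Lemma unp_final z : odd m -> zitR 0 z = (x m.-1)%:R -> zitR Tr z = (x m.-1)%:R.
Proof.
move=> hodd h0; have hmm : (m.-1 < m)%N by lia.
have hq : m.-1 = (2 * p)%N.
  by have := odd_double_half m; rewrite hodd -mul2n; lia.
apply: (static_nat _ _ _ _ (xN _ hmm) (leq0n _) _ _ h0).
- move=> t _ _ i hi1 hi2.
  suff : ~ (x m.-1 <= t.+1)%N by lia.
  move=> c1.
  have a2 := xinv_lt _ _ hmm (ip i) (_ : x m.-1 < x (2 * i).+1)%N.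
  have := ltp i; have := a2 ltac:(lia); lia.
- move=> t _ _ i _ e.
  have := xinj _ _ hmm (ip i) e; have := ltp i; lia.
Qed.

Definition slot u := [exists i : 'I_p, u == x (2 * i).+1].

Lemma sum_trunc (f : nat -> bool) T : (forall t, f t -> (t < N)%N) -> (N <= T)%N ->
  (\sum_(t < T) f t = \sum_(t < N) f t)%N.
Proof.
move=> hf hT; rewrite -(subnKC hT) big_split_ord /=.
rewrite [X in (_ + X)%N]big1 ?addn0 // => i _.
by case h: (f _) => //; have := hf _ h; lia.
Qed.

Lemma cs_lt t : csR t -> (t < N)%N.
Proof. case/existsP => i /andP[_ h]; have := xN _ (ip i); lia. Qed.

Lemma slot_lt t : slot t -> (t < N)%N.
Proof. case/existsP => i /eqP ->; exact: xN _ (ip i). Qed.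

Lemma cs_slot t : csR t -> slot t -> False.
Proof.
case/existsP => i /andP[h1 h2] /existsP[j /eqP e].
have := xinv_le _ _ (ip2 i) (ip j) (_ : x (2 * i) <= x (2 * j).+1)%N.
have := xinv_lt _ _ (ip j) (ip i) (_ : x (2 * j).+1 < x (2 * i).+1)%N.
move=> a1 a2; have := a1 ltac:(lia); have := a2 ltac:(lia); lia.
Qed.

Lemma bs_slot u : bsR (N - k + u)%N = slot u.
Proof.
apply/existsP/existsP => -[i hi]; exists i; move: hi => /eqP hi; apply/eqP; lia.
Qed.

Lemma count_bound : (\sum_(t < Tr) csR t + \sum_(t < Tr) bsR t <= N)%N.
Proof.
have hx1 : (0 < x 1)%N by have := xlt 0 1 (ltn0Sn 0) hm; lia.
have hx1N : (x 1 < N)%N by apply: xN.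
rewrite (sum_trunc _ _ cs_lt) /Tr; last lia.
have hs : (N - k <= (x 1).-1 + 2 * N)%N by lia.
rewrite -(subnKC hs) big_split_ord /=.
rewrite [X in (_ + (X + _))%N]big1 ?add0n; last first.
  move=> i _; case h: (bsR _) => //; case/existsP: h => j /eqP e.
  by have := ltn_ord i; lia.
have -> : (\sum_(i < (x 1).-1 + 2 * N - (N - k)) bsR (N - k + i)%N =
    \sum_(i < (x 1).-1 + 2 * N - (N - k)) slot i)%N.
  by apply: eq_bigr => i _; rewrite bs_slot.
rewrite (sum_trunc _ _ slot_lt); last lia.
rewrite -big_split /=.
rewrite -[X in (_ <= X)%N]card_ord -sum1_card.
apply: leq_sum => i _.
by case h1: (csR i); case h2: (slot i) => //; have := cs_slot _ h1 h2.
Qed.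

Lemma size_round : (size (W csR bsR Tr) <= 4 * N)%N.
Proof.
rewrite size_W -addnA.
have := count_bound; have := xN 1 hm; rewrite /Tr; lia.
Qed.

Definition x' j := if (j < p)%N then (x (2 * j).+1 - x 1)%N else (x m.-1 - x 1 + 1)%N.

Lemma round_ex : exists (w : seq letter) (y : nat -> nat),
  [/\ (size w <= 4 * N)%N, (forall l, (l.+1 < m - p)%N -> (y l < y l.+1)%N),
      (y (m - p).-1 < N)%N &
      forall l, (l < m)%N -> exists2 l', (l' < m - p)%N &
        cb_act N k (K - (x l)%:R) w = K - (y l')%:R].
Proof.
have hmd := odd_double_half m; rewrite -mul2n in hmd.
have hx1 : (0 < x 1)%N by have := xlt 0 1 (ltn0Sn 0) hm; lia.
have hx1N : (x 1 < N)%N by apply: xN.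
have hxm := xN m.-1 ltac:(lia).
exists (W csR bsR Tr), x'; split.
- exact: size_round.
- move=> l hl; rewrite /x'.
  have hlp : (l < p)%N by case: (odd m) hmd hl => /=; lia.
  rewrite hlp; case: ifP => hl1.
    have := xlt (2 * l).+1 (2 * l.+1).+1 ltac:(lia) ltac:(lia).
    have := xle 1 (2 * l).+1 ltac:(lia) ltac:(lia); lia.
  have hodd : odd m by case: (odd m) hmd hl => //=; lia.
  have := xle (2 * l).+1 m.-1 ltac:(rewrite hodd /= in hmd; lia) ltac:(lia).
  have := xle 1 (2 * l).+1 ltac:(lia) ltac:(lia); lia.
- rewrite /x'; case: ifP => h.
    have := xN (2 * (m - p).-1).+1 ltac:(lia); lia.
  lia.
- move=> l hl.
  have hr := run csR bsR Tr (K - (x l)%:R) (x l)%:R (subrK _ _).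
  have hT : (Tr%:R : 'Z_N) = (x 1).-1%:R by rewrite /Tr natrD natrM NZ0 mulr0 addr0.
  have hcur : forall v, zit csR bsR Tr (x l)%:R = v ->
      cb_act N k (K - (x l)%:R) (W csR bsR Tr) = K + (x 1).-1%:R - v.
    by move=> v hv; rewrite -hT -hr hv addrK.
  case: (ltnP (l./2) p) => hj.
    pose j := Ordinal hj.
    have hl2 : l = (2 * j)%N \/ l = (2 * j).+1.
      by have := odd_double_half l; rewrite -mul2n /=; case: (odd l) => /=; lia.
    have hfin : zit csR bsR Tr (x l)%:R = (x (2 * j).+1).-1%:R.
      by case: hl2 => ->; [apply: held_final | apply: foll_final].
    exists (l./2); first lia.
    rewrite (hcur _ hfin) /x' hj.
    have := xle 1 (2 * j).+1 ltac:(lia) (ip j) => h1.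
    have -> : (x (2 * j).+1).-1 = (x (2 * j).+1 - x 1 + (x 1).-1)%N by lia.
    rewrite natrD /=.
    move: (_ - _)%N ((x 1).-1) => a c; ring.
  have hodd : odd m by case: (odd m) hmd hj => //=; have := odd_double_half l; lia.
  have hlm : l = m.-1 by have := odd_double_half l; rewrite hodd /= in hmd; lia.
  exists p; first by rewrite hodd /= in hmd; lia.
  have hfin : zit csR bsR Tr (x l)%:R = (x m.-1)%:R by rewrite hlm; apply: unp_final.
  rewrite (hcur _ hfin) /x' ltnn.
  have := xle 1 m.-1 ltac:(lia) ltac:(lia) => h1.
  have -> : (x m.-1)%:R = ((x m.-1 - x 1 + 1)%N)%:R + (x 1).-1%:R :> 'Z_N.
    by rewrite -natrD; congr _%:R; lia.
  move: (_ + 1)%N ((x 1).-1) => a c; ring.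
Qed.
End Round.

Definition incr (x : nat -> nat) m := forall l, (l.+1 < m)%N -> (x l < x l.+1)%N.

Lemma iter_rounds L r : (N <= 2 ^ L)%N -> (r <= L)%N ->
  exists m (x : nat -> nat) (w : seq letter),
  [/\ (1 <= m <= 2 ^ (L - r))%N, incr x m, (x m.-1 < N)%N,
      (size w <= 4 * N * r)%N &
      forall q : 'Z_N, exists2 l, (l < m)%N & cb_act N k q w = K - (x l)%:R].
Proof.
move=> hL; elim: r => [|r IH] hr.
  exists N, id, [::]; split => //; first by rewrite subn0 hL.
  - move=> q; exists (nat_of_ord (K - q)); first exact: ltn_ord.
    by rewrite natr_Zp /cb_act /= opprB addrC subrK.
have [m [x [w [/andP[hm1 hmL] hinc hxN hw hq]]]] := IH (ltnW hr).
case: (leqP m 1) => hm.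
  exists m, x, w; split => //.
  - by have := expn_gt0 2 (L - r.+1); rewrite hm1 /=; lia.
  - by apply: leq_trans hw _; rewrite leq_mul2l ltnW ?orbT.
have [w' [y [hs hy hyN hmap]]] := round_ex m x hm hinc hxN.
exists (m - m./2)%N, y, (w ++ w'); split => //.
- have e : (2 ^ (L - r) = 2 * 2 ^ (L - r.+1))%N.
    by rewrite -expnS; congr (2 ^ _)%N; lia.
  rewrite e in hmL; apply/andP; split;
  by have := odd_double_half m; case: (odd m) => /=; rewrite -mul2n; lia.
- by rewrite size_cat mulnS; lia.
- move=> q; rewrite act_cat; have [l hl ->] := hq q.
  have [l' hl' e] := hmap l hl.
  by exists l'; rewrite // e.
Qed.

Theorem main_sec : exists w : seq letter,
    is_reset_word N k w /\ (size w <= 4 * N * up_log 2 N)%N.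
Proof.
have hL := up_logP N (ltnSn 1).
have [m [x [w [/andP[hm1 hmL] hinc hxN hw hq]]]] := iter_rounds _ _ hL (leqnn _).
rewrite subnn expn0 in hmL.
exists w; split => //.
rewrite /is_reset_word.
have -> : cb_image N k w = [set (K - (x 0%N)%:R : 'Z_N)].
  apply/setP => z; rewrite inE; apply/imsetP/eqP => [[q _ ->]|->].
    by have [l hl ->] := hq q; have -> : l = 0%N by lia.
  have [l hl e] := hq K; exists K => //; rewrite e; have -> : l = 0%N by lia.
  done.
by rewrite cards1.
Qed.
End R.

Theorem theorem1 (n k : nat) (hn : 2 <= n) (hk1 : 1 <= k) (hk2 : k <= n - 1) :
  exists w : seq letter,
    is_reset_word n k w /\ size w <= 4 * n * up_log 2 n.
Proof.
case: n hn hk2 => [|[|n']] // _ hk2.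
apply: main_sec => //.
Qed.
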